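(* Let $G$ be a finite group, $N\trianglelefteq G$, $\widetilde{G}\leq G$ and $H\leq G$. Set $M:=N\cap H$, $\widetilde{H}:=\widetilde{G}\cap H$, $\widetilde{M}:=\widetilde{G}\cap M$ and $\widetilde{N}:=\widetilde{G}\cap N$, and assume $G=NH$, $H=\widetilde{H}M$ and $\mathbf{C}_G(N)\leq H$. Let $\widetilde{\vartheta}\in\mathrm{Irr}(\widetilde{N})$ and $\widetilde{\varphi}\in\mathrm{Irr}(\widetilde{M})$ be such that $\vartheta:=\widetilde{\vartheta}^{N}\in\mathrm{Irr}(N)$, $\varphi:=\widetilde{\varphi}^{M}\in\mathrm{Irr}(M)$ and $(\widetilde{G},\widetilde{N},\widetilde{\vartheta})\geq_c(\widetilde{H},\widetilde{M},\widetilde{\varphi})$. Assume that for every $N\leq J\leq G$, with $\widetilde{J}:=J\cap\widetilde{G}$, induction of characters gives bijections $\mathrm{Irr}(\widetilde{J}\mid\widetilde{\vartheta})\to\mathrm{Irr}(J\mid\vartheta)$ and $\mathrm{Irr}(\widetilde{J}\cap H\mid\widetilde{\varphi})\to\mathrm{Irr}(J\cap H\mid\varphi)$. Then $(G,N,\vartheta)\geq_c(H,M,\varphi)$.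
   Context: $\mathrm{Irr}(X\mid\theta)$ denotes the set of irreducible characters of $X$ whose restriction to the normal subgroup on which $\theta$ is defined has $\theta$ as a constituent; $\psi^X$ denotes induction. Character triples and $\geq_c$: a character triple $(G,N,\vartheta)$ consists of $N\trianglelefteq G$ and a $G$-invariant $\vartheta\in\mathrm{Irr}(N)$. A projective representation of $G$ associated with $\vartheta$ is a map $\mathcal{P}:G\to\mathrm{GL}_{\vartheta(1)}(\mathbb{C})$ with $\mathcal{P}(x)\mathcal{P}(y)=\alpha(x,y)\mathcal{P}(xy)$ for a factor set $\alpha$, such that $\mathcal{P}|_N$ is a representation affording $\vartheta$ and $\mathcal{P}(xn)=\mathcal{P}(x)\mathcal{P}(n)$, $\mathcal{P}(nx)=\mathcal{P}(n)\mathcal{P}(x)$ for $x\in G,n\in N$. One writes $(G,N,\vartheta)\geq_c(H,M,\varphi)$ for character triples if $G=NH$, $M=N\cap H$, $\mathbf{C}_G(N)\leq H$, and there are projective representations $\mathcal{P}$ of $G$ associated with $\vartheta$ and $\mathcal{P}'$ of $H$ associated with $\varphi$, with factor sets $\alpha,\alpha'$, such that $\alpha|_{H\times H}=\alpha'$ and for every $c\in\mathbf{C}_G(N)$ the matrices $\mathcal{P}(c)$, $\mathcal{P}'(c)$ are scalar with the same scalar. *)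

(* Defs.v *)
From HB Require Import structures.
From mathcomp Require Import all_boot all_order all_algebra all_fingroup all_solvable all_field all_character.
Set Implicit Arguments. Unset Strict Implicit. Unset Printing Implicit Defensive.
Import GRing.Theory Num.Theory.
Local Open Scope ring_scope.

Section CharTriples.
Variable gT : finGroupType.

Definition char_triple (G N : {group gT}) (theta : 'CF(N)) : Prop :=
  [/\ (N <| G)%g, theta \in irr N & forall x, x \in G -> (theta ^ x)%CF = theta].

Definition proj_rep_assoc (G N : {group gT}) (theta : 'CF(N)) (n : nat)
    (P : gT -> 'M[algC]_n) (alpha : gT -> gT -> algC) : Prop :=
  [/\ theta 1%g = n%:R,
      forall x, x \in G -> P x \in unitmx,
      forall x y, x \in G -> y \in G ->
        alpha x y != 0 /\ P x *m P y = alpha x y *: P (x * y)%g,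
      [/\ P 1%g = 1%:M,
          forall x y, x \in N -> y \in N -> P (x * y)%g = P x *m P y
        & forall x, x \in N -> \tr (P x) = theta x]
    & forall x m, x \in G -> m \in N ->
        P (x * m)%g = P x *m P m /\ P (m * x)%g = P m *m P x].

Definition ge_c (G N : {group gT}) (theta : 'CF(N))
    (H M : {group gT}) (phi : 'CF(M)) : Prop :=
  [/\ char_triple G theta, char_triple H phi,
      [/\ (N * H)%g = G :> {set gT}, M :=: N :&: H & ('C_G(N) \subset H)%g]
    & exists (n m : nat) (P : gT -> 'M[algC]_n) (alpha : gT -> gT -> algC)
             (P' : gT -> 'M[algC]_m) (alpha' : gT -> gT -> algC),
        [/\ proj_rep_assoc G theta P alpha,
            proj_rep_assoc H phi P' alpha',
            (forall x y, x \in H -> y \in H -> alpha x y = alpha' x y)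
          & forall c, c \in ('C_G(N))%g ->
              exists a : algC, P c = a%:M /\ P' c = a%:M]].

Definition Irr_over (J N : {group gT}) (theta : 'CF(N)) (chi : 'CF(J)) : bool :=
  (chi \in irr J) && ('['Res[N] chi, theta] != 0).

Definition ind_bij (K A : {group gT}) (a : 'CF(A))
    (L B : {group gT}) (b : 'CF(B)) : Prop :=
  [/\ forall psi : 'CF(K), Irr_over a psi -> Irr_over b ('Ind[L] psi),
      forall psi1 psi2 : 'CF(K), Irr_over a psi1 -> Irr_over a psi2 ->
        'Ind[L] psi1 = 'Ind[L] psi2 -> psi1 = psi2
    & forall chi : 'CF(L), Irr_over b chi ->
        exists2 psi : 'CF(K), Irr_over a psi & 'Ind[L] psi = chi].

End CharTriples.

(* Main.v *)
Require Import Defs.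
From HB Require Import structures.
From mathcomp Require Import all_boot all_order all_algebra all_fingroup all_solvable all_field all_character.
Set Implicit Arguments. Unset Strict Implicit. Unset Printing Implicit Defensive.
Import GRing.Theory Num.Theory.
Local Open Scope ring_scope.

Section Induce.
Variables (gT : finGroupType) (G N K A : {group gT}).
Hypotheses (nNG : (N <| G)%g) (sKG : K \subset G) (sGKN : G \subset (K * N)%g)
  (defA : A :=: K :&: N).

Local Open Scope group_scope.

Lemma sAN : A \subset N. Proof. by rewrite defA subsetIr. Qed.
Lemma sAK : A \subset K. Proof. by rewrite defA subsetIl. Qed.
Lemma nAK : A <| K. Proof. by rewrite defA (normalGI sKG nNG). Qed.
Lemma memA x : (x \in A) = (x \in K) && (x \in N). Proof. by rewrite defA inE. Qed.
Lemma sNG : N \subset G. Proof. exact: normal_sub. Qed.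
Lemma inNG x : x \in N -> x \in G. Proof. exact: (subsetP sNG). Qed.
Lemma inKG x : x \in K -> x \in G. Proof. exact: (subsetP sKG). Qed.
Lemma normNG x : x \in G -> x \in 'N(N). Proof. exact: (subsetP (normal_norm nNG)). Qed.
Lemma normAK x : x \in K -> x \in 'N(A). Proof. exact: (subsetP (normal_norm nAK)). Qed.

Lemma decG x : x \in G -> exists2 k, k \in K & exists2 n, n \in N & x = k * n.
Proof.
move=> Gx; have := subsetP sGKN x Gx; case/mulsgP=> k n Kk Nn ->.
by exists k => //; exists n.
Qed.

Local Notation kk := #|lcosets A N|.

Definition tau (a : 'I_kk) : gT := repr (enum_val a).

Lemma tau_coset a : enum_val a = tau a *: A /\ tau a \in N.
Proof.
have := enum_valP a; case/lcosetsP=> x Nx def.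
have tx : tau a \in x *: A by rewrite /tau def; apply: (mem_repr x); apply: lcoset_refl.
split; first by rewrite def; apply/esym/lcoset_eqP.
by case/lcosetP: tx => y Ay ->; rewrite groupM // (subsetP sAN).
Qed.

Lemma tauN a : tau a \in N. Proof. by case: (tau_coset a). Qed.
Lemma tauG a : tau a \in G. Proof. exact/inNG/tauN. Qed.

Lemma tau_inj a b : (tau a)^-1 * tau b \in K -> a = b.
Proof.
move=> Kab; have Aab : (tau a)^-1 * tau b \in A by rewrite memA Kab groupM ?groupV ?tauN.
have : tau b \in tau a *: A by rewrite mem_lcoset.
move/lcoset_eqP => e; apply: enum_val_inj.
by rewrite (proj1 (tau_coset a)) (proj1 (tau_coset b)) e.
Qed.

Lemma tau_ex x : x \in G -> exists b, x * tau b \in K.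
Proof.
case/decG=> k Kk [n Nn ->].
have HC : n^-1 *: A \in lcosets A N by apply/lcosetsP; exists n^-1; rewrite ?groupV.
exists (enum_rank_in HC (n^-1 *: A)).
set b := enum_rank_in _ _.
have eb : enum_val b = n^-1 *: A by rewrite /b enum_rankK_in.
have : tau b \in n^-1 *: A by rewrite -eb (proj1 (tau_coset b)); apply: lcoset_refl.
rewrite mem_lcoset invgK => An.
by rewrite -mulgA groupM // (subsetP sAK).
Qed.

Lemma tau_uniq x b c : x * tau b \in K -> x * tau c \in K -> b = c.
Proof.
move=> Kb Kc; apply: tau_inj.
have -> : (tau b)^-1 * tau c = (x * tau b)^-1 * (x * tau c).
  by rewrite invMg -mulgA mulKg.
by rewrite groupM ?groupV.
Qed.


Local Notation "c *s X" := (GRing.scale c X) (at level 40).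

Variables (th : 'CF(A)) (m : nat) (Pt : gT -> 'M[algC]_m) (al : gT -> gT -> algC).
Hypotheses (thirr : th \in irr A) (HP : proj_rep_assoc K th Pt al).

Lemma Pt1 : Pt 1 = 1%:M. Proof. by case: HP => _ _ _ []. Qed.
Lemma Pt_unit x : x \in K -> Pt x \in unitmx. Proof. by case: HP => _ H _ _ _; apply: H. Qed.
Lemma PtM x y : x \in K -> y \in K -> Pt x *m Pt y = al x y *s Pt (x * y).
Proof. by case: HP => _ _ H _ _ Kx Ky; case: (H x y Kx Ky). Qed.
Lemma al_neq0 x y : x \in K -> y \in K -> al x y != 0.
Proof. by case: HP => _ _ H _ _ Kx Ky; case: (H x y Kx Ky). Qed.
Lemma PtMr x a : x \in K -> a \in A -> Pt (x * a) = Pt x *m Pt a.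
Proof. by case: HP => _ _ _ _ H Kx Aa; case: (H x a Kx Aa). Qed.
Lemma PtMl x a : x \in K -> a \in A -> Pt (a * x) = Pt a *m Pt x.
Proof. by case: HP => _ _ _ _ H Kx Aa; case: (H x a Kx Aa). Qed.
Lemma Pt_tr x : x \in A -> \tr (Pt x) = th x.
Proof. by case: HP => _ _ _ [_ _ H] _; apply: H. Qed.
Lemma th1 : th 1 = m%:R. Proof. by case: HP. Qed.

Lemma m_neq0 : (m%:R : algC) != 0%R.
Proof.
rewrite -th1; case/irrP: thirr => i ->; exact: irr1_neq0.
Qed.

Lemma scal_cancel (c d : algC) (X : 'M[algC]_m) :
  X \in unitmx -> c *s X = d *s X -> c = d.
Proof.
move=> uX e.
have : (c *s X) *m invmx X = (d *s X) *m invmx X by rewrite e.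
rewrite -!scalemxAl mulmxV // => /(congr1 mxtrace).
rewrite !mxtraceZ mxtrace1 => /mulIf; apply; exact: m_neq0.
Qed.

Lemma al_x1 x : x \in K -> al x 1 = 1%R.
Proof.
move=> Kx; apply/esym/(@scal_cancel _ _ (Pt x)); first exact: Pt_unit.
by rewrite GRing.scale1r; have := PtM Kx (group1 K); rewrite Pt1 mulmx1 mulg1.
Qed.

Lemma al_1x x : x \in K -> al 1 x = 1%R.
Proof.
move=> Kx; apply/esym/(@scal_cancel _ _ (Pt x)); first exact: Pt_unit.
by rewrite GRing.scale1r; have := PtM (group1 K) Kx; rewrite Pt1 mul1mx mul1g.
Qed.

Lemma al_right x y a : x \in K -> y \in K -> a \in A -> al x (y * a) = al x y.
Proof.
move=> Kx Ky Aa; have Ka := subsetP sAK a Aa.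
apply: (@scal_cancel _ _ (Pt (x * y * a))); first by rewrite Pt_unit // !groupM.
rewrite -mulgA -PtM ?groupM // PtMr // mulmxA PtM // -scalemxAl -PtMr ?groupM //.
by rewrite mulgA.
Qed.

Lemma al_left x y a : x \in K -> y \in K -> a \in A -> al (x * a) y = al x y.
Proof.
move=> Kx Ky Aa; have Ka := subsetP sAK a Aa.
have Aay : a ^ y \in A by rewrite memJ_norm // normAK.
apply: (@scal_cancel _ _ (Pt (x * a * y))); first by rewrite Pt_unit // !groupM.
have e1 : Pt (x * a) *m Pt y = al x y *s Pt (x * a * y).
  rewrite PtMr // -mulmxA -PtMl // PtM ?groupM //.
  have -> : al x (a * y) = al x y by rewrite conjgC al_right.
  by rewrite mulgA.
by rewrite -PtM ?groupM // e1.
Qed.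

Lemma al_inv u v u' v' : u \in K -> v \in K -> u' \in K -> v' \in K ->
  u^-1 * u' \in A -> v^-1 * v' \in A -> al u' v' = al u v.
Proof.
move=> Ku Kv Ku' Kv' Au Av.
have KA := subsetP sAK.
have e1 : al u' v' = al u' v.
  by rewrite -{1}(mulKVg v v') al_right.
by rewrite e1 -{1}(mulKVg u u') al_left.
Qed.

Definition rho g := repr [set u in K | g^-1 * u \in N].

Lemma rhoP g : g \in G -> rho g \in K /\ g^-1 * rho g \in N.
Proof.
move=> Gg; case/decG: (Gg) => k Kk [n Nn e].
have : k \in [set u in K | g^-1 * u \in N].
  by rewrite inE Kk e invMg -mulgA mulVg mulg1 groupV.
by move/mem_repr; rewrite inE => /andP.
Qed.

Definition alpha g h := al (rho g) (rho h).

Lemma alphaE x y u v : x \in G -> y \in G -> u \in K -> v \in K ->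
  x^-1 * u \in N -> y^-1 * v \in N -> alpha x y = al u v.
Proof.
move=> Gx Gy Ku Kv Nu Nv; case: (rhoP Gx) => Kx Nx; case: (rhoP Gy) => Ky Ny.
rewrite /alpha; apply/esym/al_inv => //; rewrite memA groupM ?groupV //=.
  have -> : (rho x)^-1 * u = (x^-1 * rho x)^-1 * (x^-1 * u).
    by rewrite invMg invgK -mulgA mulKVg.
  by rewrite groupM ?groupV.
have -> : (rho y)^-1 * v = (y^-1 * rho y)^-1 * (y^-1 * v).
  by rewrite invMg invgK -mulgA mulKVg.
by rewrite groupM ?groupV.
Qed.

Definition Q g (a b : 'I_kk) : 'M[algC]_m :=
  if (tau a)^-1 * g * tau b \in K then Pt ((tau a)^-1 * g * tau b) else 0%R.

Lemma conjN g x : g \in G -> x \in N -> g^-1 * x * g \in N.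
Proof. by move=> Gg Nx; rewrite -mulgA -conjgE memJ_norm // normNG. Qed.

Lemma Qmul g h a b : g \in G -> h \in G ->
  \sum_(c < kk) Q g a c *m Q h c b = (alpha g h) *s Q (g * h) a b.
Proof.
move=> Gg Gh.
have [c0 Hc0] : exists c, (tau a)^-1 * g * tau c \in K.
  have [c Hc] := tau_ex (x := (tau a)^-1 * g) (groupM (groupVr (tauG a)) Gg).
  by exists c.
rewrite (bigD1 c0) //= big1 ?addr0; last first.
  move=> c ne; rewrite /Q; case: ifP => Hc; last by rewrite mul0mx.
  by rewrite -(tau_uniq Hc0 Hc) eqxx in ne.
rewrite /Q Hc0.
have Huv : (tau a)^-1 * g * tau c0 * ((tau c0)^-1 * h * tau b)
         = (tau a)^-1 * (g * h) * tau b.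
  by rewrite !mulgA mulgK.
case: (boolP ((tau c0)^-1 * h * tau b \in K)) => Hv.
  rewrite PtM // Huv -Huv groupM //; congr (_ *s _); symmetry; apply: alphaE => //.
    rewrite !mulgA; apply: groupM; last exact: tauN.
    by rewrite conjN // groupV tauN.
  rewrite !mulgA; apply: groupM; last exact: tauN.
  by rewrite conjN // groupV tauN.
rewrite mulmx0 ifF ?scaler0 //; apply/negP => Kuv; case/negP: Hv.
have -> : (tau c0)^-1 * h * tau b
   = ((tau a)^-1 * g * tau c0)^-1 * ((tau a)^-1 * (g * h) * tau b) by rewrite -Huv mulKg.
by rewrite groupM ?groupV.
Qed.


Definition I : finType := ('I_kk * 'I_m)%type.
Local Notation n := #|I|.

Definition P g : 'M[algC]_n :=
  \matrix_(i, j) Q g (enum_val i).1 (enum_val j).1 (enum_val i).2 (enum_val j).2.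

Lemma sum_I (F : I -> algC) :
  \sum_(l < n) F (enum_val l) = \sum_(a < kk) \sum_(i < m) F (a, i).
Proof. by rewrite -(big_enum_val F) pair_big /=; apply: eq_big => // [[a i]]. Qed.

Lemma PM g h : g \in G -> h \in G -> P g *m P h = alpha g h *s P (g * h).
Proof.
move=> Gg Gh; apply/matrixP => i j; rewrite !mxE.
under eq_bigr do rewrite !mxE.
rewrite (sum_I (fun p => Q g (enum_val i).1 p.1 (enum_val i).2 p.2
     * Q h p.1 (enum_val j).1 p.2 (enum_val j).2)%R) /=.
rewrite (eq_bigr (fun c => (Q g (enum_val i).1 c *m Q h c (enum_val j).1)
                   (enum_val i).2 (enum_val j).2)); last by move=> c _; rewrite mxE.
by rewrite -summxE Qmul // mxE.
Qed.

Lemma P1 : P 1 = 1%:M.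
Proof.
apply/matrixP => i j; rewrite !mxE /Q mulg1 -(inj_eq enum_val_inj).
case: (enum_val i) => a ia; case: (enum_val j) => b jb /=.
rewrite xpair_eqE; case: ifP => Kab.
  have ab := tau_inj Kab; subst b; by rewrite mulVg Pt1 mxE eqxx.
case: (a =P b) => [eab|] /=; last by rewrite mxE.
by rewrite eab mulVg group1 in Kab.
Qed.

Lemma trP_sum x : \tr (P x) = \sum_(a < kk) \tr (Q x a a).
Proof.
rewrite /mxtrace; under eq_bigr do rewrite mxE.
by rewrite (sum_I (fun p => Q x p.1 p.1 p.2 p.2)).
Qed.

Lemma trP x : x \in N -> \tr (P x) = \sum_(a < kk) th (x ^ tau a)%g.
Proof.
move=> Nx; rewrite trP_sum; apply: eq_bigr => a _; rewrite /Q.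
have -> : (tau a)^-1 * x * tau a = x ^ tau a by rewrite conjgE mulgA.
case: ifP => Kx.
  by rewrite Pt_tr // memA Kx memJ_norm ?normNG ?tauG.
by rewrite mxtrace0 cfun0 // memA Kx.
Qed.

Lemma Ind_sum x : x \in N -> 'Ind[N] th x = \sum_(a < kk) th (x ^ tau a)%g.
Proof.
move=> Nx; rewrite cfIndE ?sAN //.
have e1 : (\sum_(y in N) th (x ^ y)%g =
   \sum_(y in N) \sum_(a < kk) (if y \in (tau a *: A)%g then th (x ^ y)%g else 0))%R.
  apply: eq_bigr => y Ny.
  have [a0 Ha0] := tau_ex (groupVr (inNG Ny)).
  have Ha0' : y \in tau a0 *: A.
    rewrite mem_lcoset memA -{1}(invgK y) -invMg groupV Ha0 /=.
    by rewrite groupM ?groupV ?tauN.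
  rewrite (bigD1 a0) //= Ha0' big1 ?addr0 // => b nb.
  case: ifP => // Hb; case/negP: nb; apply/eqP/esym/tau_inj.
  rewrite mem_lcoset in Ha0'; rewrite mem_lcoset in Hb.
  have -> : (tau a0)^-1 * tau b = ((tau a0)^-1 * y) * ((tau b)^-1 * y)^-1.
    by rewrite invMg invgK !mulgA mulgK.
  by rewrite groupM ?groupV // (subsetP sAK).
rewrite e1 exchange_big /=.
have e2 : forall a : 'I_kk, (\sum_(y in N) (if y \in (tau a *: A)%g then th (x ^ y)%g else 0)
     = #|A|%:R * th (x ^ tau a)%g)%R.
  move=> a; rewrite -big_mkcondr /=.
  rewrite (eq_bigl (fun y => y \in tau a *: A)); last first.
    move=> y /=; apply/andb_idl; rewrite mem_lcoset => Hy.
    have -> : y = tau a * ((tau a)^-1 * y) by rewrite mulKVg.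
    by rewrite groupM ?tauN // (subsetP sAN).
  rewrite -lcosetE /lcoset big_imset /=; last by move=> y z _ _; apply: mulgI.
  rewrite (eq_bigr (fun _ => th (x ^ tau a)%g)); last first.
    by move=> z Az /=; rewrite conjgM (cfunJ _ _ Az).
  by rewrite sumr_const mulr_natl.
rewrite (eq_bigr _ (fun a _ => e2 a)) -mulr_sumr mulKf //; exact: neq0CG.
Qed.


Lemma Ind1 : 'Ind[N] th 1 = (n%:R)%R.
Proof.
rewrite cfInd1 ?sAN // th1 -natrM /I card_prod !card_ord card_lcosets //.
Qed.

Hypothesis Indirr : 'Ind[N] th \in irr N.

Lemma n_neq0 : (n%:R : algC) != 0%R.
Proof. rewrite -Ind1; case/irrP: Indirr => i ->; exact: irr1_neq0. Qed.

Lemma alpha_neq0 x y : x \in G -> y \in G -> alpha x y != 0%R.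
Proof.
move=> Gx Gy; case: (rhoP Gx) => Kx _; case: (rhoP Gy) => Ky _.
exact: al_neq0.
Qed.

Lemma alpha_xN x a : x \in G -> a \in N -> alpha x a = 1%R.
Proof.
move=> Gx Na; case: (rhoP Gx) => Kx Nx.
rewrite (@alphaE x a (rho x) 1) //; first exact: al_x1.
- exact: inNG.
- by rewrite mulg1 groupV.
Qed.

Lemma alpha_Nx x a : x \in G -> a \in N -> alpha a x = 1%R.
Proof.
move=> Gx Na; case: (rhoP Gx) => Kx Nx.
rewrite (@alphaE a x 1 (rho x)) //; first exact: al_1x.
- exact: inNG.
- by rewrite mulg1 groupV.
Qed.

Lemma P_unit x : x \in G -> P x \in unitmx.
Proof.
move=> Gx.
have e : P x *m ((alpha x x^-1)^-1 *s P x^-1) = 1%:M.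
  rewrite -scalemxAr PM ?groupV // mulgV P1 GRing.scalerA mulVf ?GRing.scale1r //.
  exact: alpha_neq0 (groupVr Gx).
by case: (mulmx1_unit e).
Qed.

Lemma PMr x a : x \in G -> a \in N -> P (x * a) = P x *m P a.
Proof. by move=> Gx Na; have Ga := inNG Na; rewrite PM // alpha_xN // GRing.scale1r. Qed.
Lemma PMl x a : x \in G -> a \in N -> P (a * x) = P a *m P x.
Proof. by move=> Gx Na; have Ga := inNG Na; rewrite PM // alpha_Nx // GRing.scale1r. Qed.

Lemma proj_ok : proj_rep_assoc G ('Ind[N] th) P alpha.
Proof.
split.
- exact: Ind1.
- exact: P_unit.
- by move=> x y Gx Gy; split; [exact: alpha_neq0 | rewrite PM].
- split; first exact: P1.
    by move=> x y Nx Ny; rewrite PMr ?inNG.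
  by move=> x Nx; rewrite trP // Ind_sum.
- by move=> x a Gx Na; split; [rewrite PMr | rewrite PMl].
Qed.

Lemma Pcent c : c \in 'C_G(N) -> c \in K /\ (forall a, Pt c = a%:M -> P c = a%:M).
Proof.
case/setIP => Gc cNc.
have comm y : y \in N -> c * y = y * c by move=> Ny; apply: (centP cNc).
have tauc a : (tau a)^-1 * c * tau a = c by rewrite -mulgA comm ?tauN // mulKg.
have Kc : c \in K.
  apply/negPn/negP => nKc.
  have mxr : mx_repr N P.
    by split; [exact: P1 | move=> x y Nx Ny; rewrite PMr ?inNG].
  pose rG := MxRepresentation mxr.
  have crG : cfRepr rG = 'Ind[N] th.
    apply/cfun_inP => x Nx; rewrite cfunE Nx mulr1n /= trP // Ind_sum //.
  have irrG : mx_irreducible rG.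
    move: Indirr; rewrite -crG => /irr_reprP [rG' irr' e].
    apply: (mx_rsim_irr _ irr'); apply/cfRepr_rsimP; by rewrite -e.
  have absG := @groupC gT N n rG irrG.
  have cent : centgmx rG (P c).
    by apply/centgmxP => x Nx /=; rewrite -PMr // -PMl // comm.
  have /is_scalar_mxP [s Ps] := mx_abs_irr_cent_scalar absG cent.
  have tr0 : \tr (P c) = 0%R.
    rewrite trP_sum big1 // => a _; rewrite /Q tauc (negPf nKc); exact: mxtrace0.
  have s0 : s = 0%R.
    move: tr0; rewrite Ps mxtrace_scalar -mulr_natr => /eqP.
    by rewrite mulf_eq0 (negPf n_neq0) orbF => /eqP.
  have := PM Gc (groupVr Gc); rewrite Ps s0 mulgV P1 mul_scalar_mx GRing.scale0r.
  move/(congr1 mxtrace); rewrite mxtrace0 mxtraceZ mxtrace1 => /esym/eqP.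
  by rewrite mulf_eq0 (negPf n_neq0) orbF (negPf (alpha_neq0 Gc (groupVr Gc))).
split => // a Pca; apply/matrixP => i j; rewrite !mxE -(inj_eq enum_val_inj).
case: (enum_val i) => b ib; case: (enum_val j) => b' jb /=; rewrite /Q xpair_eqE.
have -> : (tau b)^-1 * c * tau b' = c * ((tau b)^-1 * tau b').
  by rewrite -(comm _ (groupVr (tauN b))) mulgA.
rewrite groupMl //; case: ifP => H.
  have e := tau_inj H; subst b'; by rewrite mulVg mulg1 Pca mxE eqxx.
case: (b =P b') => [e|] /=; first by rewrite e mulVg group1 in H.
by move=> _; rewrite mxE mulr0n.
Qed.


Lemma Ind_inv (thinv : forall x, x \in K -> (th ^ x)%CF = th) g :
  g \in G -> ('Ind[N] th ^ g)%CF = 'Ind[N] th.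
Proof.
case/decG => k Kk [x Nx ->].
have Gk := inKG Kk; have Gx := inNG Nx.
rewrite cfConjgMnorm ?normNG // cfConjgInd_norm ?normNG ?normAK // thinv //.
exact: cfConjg_id.
Qed.

Lemma induce_pack : exists (nn : nat) (PP : gT -> 'M[algC]_nn) (aa : gT -> gT -> algC),
  [/\ proj_rep_assoc G ('Ind[N] th) PP aa,
      forall x y u v, x \in G -> y \in G -> u \in K -> v \in K ->
        x^-1 * u \in N -> y^-1 * v \in N -> aa x y = al u v
    & forall c, c \in 'C_G(N) -> c \in K /\ (forall a, Pt c = a%:M -> PP c = a%:M)].
Proof. exists n, P, alpha; split; [exact: proj_ok | exact: alphaE | exact: Pcent]. Qed.

End Induce.


Theorem lemma2p1 (gT : finGroupType) (G N Gt H : {group gT})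
    (tht : 'CF((Gt :&: N)%G)) (phit : 'CF((Gt :&: (N :&: H))%G)) :
  (N <| G)%g -> Gt \subset G -> H \subset G ->
  (N * H)%g = G :> {set gT} ->
  ((Gt :&: H) * (N :&: H))%g = H :> {set gT} ->
  ('C_G(N) \subset H)%g ->
  tht \in irr (Gt :&: N)%G ->
  phit \in irr (Gt :&: (N :&: H))%G ->
  'Ind[N] tht \in irr N ->
  'Ind[(N :&: H)%G] phit \in irr (N :&: H)%G ->
  ge_c Gt tht (Gt :&: H)%G phit ->
  (forall J : {group gT}, N \subset J -> J \subset G ->
     ind_bij (J :&: Gt)%G tht J ('Ind[N] tht) /\
     ind_bij ((J :&: Gt) :&: H)%G phit (J :&: H)%G
             ('Ind[(N :&: H)%G] phit)) ->
  ge_c G ('Ind[N] tht) H ('Ind[(N :&: H)%G] phit).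
Proof.
move=> nNG sGtG sHG defG defH sCH tirr pirr Tirr Pirr hge _.
case: hge => [[_ _ tinv] [_ _ pinv] _ [n1 [m1 [Pt [alt [Pt' [alt' [HPt HPt' eqa scal]]]]]]]].
have sGKN : G \subset (Gt * N)%g.
  rewrite -defG; apply/subsetP => x /mulsgP [y h Ny Hh ->].
  have : h \in ((Gt :&: H) * (N :&: H))%g by rewrite defH.
  case/mulsgP => k mm /setIP [Gtk _] /setIP [Nm _] ->.
  apply/mulsgP; exists k (k^-1 * y * k * mm)%g => //.
    rewrite groupM // -mulgA -conjgE memJ_norm //.
    exact: (subsetP (normal_norm nNG)) (subsetP sGtG k Gtk).
  by rewrite !mulgA mulgV mul1g.
have nMH : (N :&: H <| H)%g by rewrite setIC (normalGI sHG nNG).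
have sKH : Gt :&: H \subset H by apply: subsetIr.
have sHKM : H \subset ((Gt :&: H) * (N :&: H))%g by rewrite defH.
have defA' : (Gt :&: (N :&: H)) = (Gt :&: H) :&: (N :&: H).
  by rewrite setIACA setIid setIA.
have [n2 [P1 [a1 [HP1 Ha1 HC1]]]] :=
  induce_pack (A := (Gt :&: N)%G) nNG sGtG sGKN (erefl _) tirr HPt Tirr.
have [n3 [P2 [a2 [HP2 Ha2 HC2]]]] :=
  induce_pack (G := H) (N := (N :&: H)%G) (K := (Gt :&: H)%G)
    (A := (Gt :&: (N :&: H))%G) nMH sKH sHKM defA' pirr HPt' Pirr.
split.
- split => //; exact: (Ind_inv nNG sGtG sGKN (erefl _) tinv).
- split => //; exact: (Ind_inv nMH sKH sHKM defA' pinv).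
- by split.
exists n2, n3, P1, a1, P2, a2; split => //.
  have dec x : x \in H -> exists2 u, u \in Gt :&: H & (x^-1 * u)%g \in N :&: H.
    move=> Hx; have : x \in ((Gt :&: H) * (N :&: H))%g by rewrite defH.
    case/mulsgP => u mm Ku Mm ->; exists u => //.
    by rewrite invMg -mulgA mulVg mulg1 groupV.
  move=> x y Hx Hy; have [u Ku Nu] := dec x Hx; have [v Kv Nv] := dec y Hy.
  have Gx := subsetP sHG x Hx; have Gy := subsetP sHG y Hy.
  case/setIP: (Ku) => Gtu _; case/setIP: (Kv) => Gtv _.
  case/setIP: (Nu) => Nu' _; case/setIP: (Nv) => Nv' _.
  by rewrite (Ha1 x y u v) // (Ha2 x y u v) // eqa.
move=> c Cc; have [Gtc f1] := HC1 c Cc.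
case/setIP: (Cc) => Gc cNc.
have Cc' : c \in ('C_Gt(Gt :&: N))%g.
  by rewrite inE Gtc (subsetP (centS (subsetIr Gt N))).
have [a [e1 e2]] := scal c Cc'.
have Hc := subsetP sCH c Cc.
have Cc2 : c \in ('C_H(N :&: H))%g.
  by rewrite inE Hc (subsetP (centS (subsetIl N H))).
have [_ f2] := HC2 c Cc2.
by exists a; split; [apply: f1 | apply: f2].
Qed.
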